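(* Consider an affiliation random graph mixture model with $Q\ge 2$ groups (either the binary one or the weighted one), with all parameters other than $\boldsymbol\pi$ held fixed. If $n<Q$, then the group proportions are not identifiable up to label swapping from the joint distribution of $K_n$: there exist $\boldsymbol\pi,\boldsymbol\pi'$ in the open simplex, with $\boldsymbol\pi'$ not a permutation of $\boldsymbol\pi$, which induce the same joint law of $K_n$. Equivalently, identifiability of $\boldsymbol\pi$ up to label swapping from the law of $K_n$ requires $n\ge Q$.
   Context: Random graph mixture model: nodes have i.i.d. latent groups $Z_i\in\{1,\dots,Q\}$ with $\pi_q=\mathbb P(Z_i=q)\in(0,1)$, $\sum_q\pi_q=1$; edge variables $X_{ij}$ ($i<j$) are conditionally independent given all $Z$'s, with law of $X_{ij}$ depending only on $(Z_i,Z_j)$. Binary affiliation model: $X_{ij}\in\{0,1\}$, $\mathbb P(X_{ij}=1\mid Z_i=q,Z_j=l)=\alpha$ if $q=l$, $\beta$ if $q\ne l$. Weighted affiliation model: the conditional law of $X_{ij}$ given $Z_i=q,Z_j=l$ is $\mu_{\rm in}$ if $q=l$ and $\mu_{\rm out}$ if $q\ne l$, where $\mu_{\rm in},\mu_{\rm out}$ are probability measures on $\mathbb N$, $\mathbb R$ or $\mathbb R^s$ (e.g. $\mu=(1-p)\delta_0+pF$ with $F$ having no atom at $0$). $K_n$ denotes the collection of the $\binom n2$ edge variables among a set of $n$ nodes. *)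

(* Defs.v *)
From HB Require Import structures.
From mathcomp Require Import all_boot all_order all_algebra all_fingroup.
Set Implicit Arguments. Unset Strict Implicit. Unset Printing Implicit Defensive.
Import Order.TTheory GRing.Theory Num.Theory.
Local Open Scope ring_scope.

Definition open_simplex (R : realFieldType) (Q : nat) (pi : 'I_Q -> R) : Prop :=
  (forall q, 0 < pi q) /\ \sum_(q < Q) pi q = 1.

Definition is_label_perm (R : realFieldType) (Q : nat) (pi pi' : 'I_Q -> R) : Prop :=
  exists s : {perm 'I_Q}, forall q, pi' q = pi (s q).

(* Binary affiliation model: probability that K_n takes the value x
   (only the entries x i j with i < j are used). *)
Definition binary_affil_law (R : realFieldType) (Q n : nat) (pi : 'I_Q -> R)
  (alpha beta : R) (x : 'I_n -> 'I_n -> bool) : R :=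
  \sum_(z : {ffun 'I_n -> 'I_Q})
    ((\prod_(i < n) pi (z i)) *
     \prod_(i < n) \prod_(j < n | (i < j)%N)
        (if z i == z j then (if x i j then alpha else 1 - alpha)
         else (if x i j then beta else 1 - beta))).

(* Weighted affiliation model: probability that X_ij lies in A i j for all
   i < j, where mu_in, mu_out give the probabilities of the events (of type E)
   under the in-group and out-group edge laws. *)
Definition weighted_affil_law (R : realFieldType) (Q n : nat) (pi : 'I_Q -> R)
  (E : Type) (mu_in mu_out : E -> R) (A : 'I_n -> 'I_n -> E) : R :=
  \sum_(z : {ffun 'I_n -> 'I_Q})
    ((\prod_(i < n) pi (z i)) *
     \prod_(i < n) \prod_(j < n | (i < j)%N)
        (if z i == z j then mu_in (A i j) else mu_out (A i j))).

(* Main.v *)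
Require Import Defs.
From HB Require Import structures.
From mathcomp Require Import all_boot all_order all_algebra all_fingroup.
From Stdlib Require Import Lia.
Import Order.TTheory GRing.Theory Num.Theory.
Set Implicit Arguments. Unset Strict Implicit. Unset Printing Implicit Defensive.
Local Open Scope ring_scope.

Section B.
Variable R : numFieldType.
Implicit Types x : nat -> R.

Definition fp Q x : {poly R} := \prod_(i < Q) ('X - (x i)%:P).
Definition hp Q x (i : 'I_Q) : {poly R} := \prod_(j < Q | j != i) ('X - (x j)%:P).
Definition ps Q x k : R := \sum_(i < Q) x i ^+ k.

Lemma prod_recr_cond n (P : pred 'I_n.+1) (F : 'I_n.+1 -> {poly R}) :
  \prod_(j < n.+1 | P j) F j =
  (\prod_(j < n | P (widen_ord (leqnSn n) j)) F (widen_ord (leqnSn n) j)) *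
  (if P ord_max then F ord_max else 1).
Proof. by rewrite big_mkcond big_ord_recr /= -big_mkcond. Qed.

Lemma deriv_fp Q x : (fp Q x)^`() = \sum_(i < Q) hp x i.
Proof.
elim: Q => [|Q IH]; first by rewrite /fp big_ord0 derivC big_ord0.
rewrite /fp big_ord_recr /= derivM IH derivXsubC mulr1 big_ord_recr /=.
congr (_ + _).
  rewrite mulr_suml; apply: eq_bigr => i _.
  rewrite /hp prod_recr_cond /=.
  have -> : (ord_max != widen_ord (leqnSn Q) i) by rewrite neq_ltn /= ltn_ord orbT.
  congr (_ * _); apply: eq_bigl => j.
rewrite /hp prod_recr_cond eqxx mulr1; apply: eq_bigl => j.
by rewrite neq_ltn /= ltn_ord.
Qed.

Lemma fp_hp Q x (i : 'I_Q) : fp Q x = ('X - (x i)%:P) * hp x i.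
Proof. by rewrite /fp (bigD1 i). Qed.

Lemma size_fp Q x : size (fp Q x) = Q.+1.
Proof. by rewrite size_prod_XsubC /index_enum -enumT size_enum_ord. Qed.

Lemma hp_coef Q x (i : 'I_Q) : (hp x i)`_Q.-1 = 1.
Proof.
have mh : hp x i \is monic by apply: monic_prod_XsubC.
have Hs : size (hp x i) = Q.
  have := size_fp Q x; rewrite (fp_hp x i) size_monicM ?monicXsubC ?monic_neq0 //.
  by rewrite size_XsubC => -[].
by rewrite -[X in _`_X.-1]Hs -lead_coefE; apply/monicP.
Qed.

Lemma keyid Q x k :
  \sum_(i < Q) (x i ^+ k) *: hp x i =
  'X^k * (fp Q x)^`() - fp Q x * \sum_(j < k) 'X^(k.-1 - j) * (ps Q x j)%:P.
Proof.
rewrite deriv_fp mulr_sumr.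
have -> : \sum_(j < k) 'X^(k.-1 - j) * (ps Q x j)%:P =
    \sum_(i < Q) \sum_(j < k) 'X^(k.-1 - j) * (x i)%:P ^+ j.
  rewrite exchange_big; apply: eq_bigr => j _.
  rewrite /ps rmorph_sum mulr_sumr; apply: eq_bigr => i _. by rewrite rmorphXn.
rewrite mulr_sumr -sumrB; apply: eq_bigr => i _.
rewrite (fp_hp x i) mulrAC -subrXX mulrBl opprB addrC subrK.
by rewrite -polyC_exp mul_polyC.
Qed.


Lemma natfact (Q' k' j : nat) : (j <= k')%N -> (k' < Q')%N ->
  (Q' - (k' - j) = Q'.+1 - k'.+1 + j)%N.
Proof. move=> /ssrnat.leP h1 /ssrnat.ltP h2; rewrite subSS !subnE !addnE; lia. Qed.

Lemma ps_rec Q' x k : (k <= Q')%N ->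
  ps Q'.+1 x k = (fp Q'.+1 x)`_(Q'.+1 - k) *+ (Q'.+1 - k) -
     \sum_(j < k) ps Q'.+1 x j * (fp Q'.+1 x)`_(Q'.+1 - k + j).
Proof.
move=> hk.
have := congr1 (fun p : {poly R} => p`_Q') (keyid Q'.+1 x k).
rewrite /= coef_sum coefB coefXnM ltnNge hk /= coef_deriv.
have -> : (Q' - k).+1 = (Q'.+1 - k)%N by rewrite subSn.
rewrite mulr_sumr coef_sum => E.
have L1 : \sum_(i < Q'.+1) (x i ^+ k *: hp x i)`_Q' = ps Q'.+1 x k.
  by apply: eq_bigr => i _; rewrite coefZ (hp_coef x i) mulr1.
rewrite -L1 E {E L1}; congr (_ - _).
apply: eq_bigr => j _; rewrite mulrA coefMC mulrC coefMXn.
case: k hk j => [|k] hk j; first by case: j.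
rewrite ltnNge (leq_trans (leq_subr _ _) (ltnW hk)) /=.
by rewrite /= natfact // -ltnS.
Qed.

Lemma ps_eq Q' x y : (forall i, (0 < i)%N -> (fp Q'.+1 x)`_i = (fp Q'.+1 y)`_i) ->
  forall k, (k <= Q')%N -> ps Q'.+1 x k = ps Q'.+1 y k.
Proof.
move=> H; elim/ltn_ind => k IH hk.
rewrite !ps_rec // H ?subn_gt0 ?ltnS //; congr (_ - _).
apply: eq_bigr => j _; rewrite IH ?H //.
- by rewrite addn_gt0 subn_gt0 ltnS hk.
- by apply: leq_trans (ltnW (ltn_ord j)) hk.
Qed.

End B.

Section Core.
Variables (R : numFieldType) (Q : nat).
Local Notation T := ('I_Q).

Definition psum (pi : T -> R) k := \sum_(q < Q) pi q ^+ k.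
Definition inv_g n (g : {ffun 'I_n -> T} -> R) :=
  forall (s : {perm T}) (z : {ffun 'I_n -> T}), g [ffun i => s (z i)] = g z.
Definition L n (m : 'I_n -> nat) (g : {ffun 'I_n -> T} -> R) (pi : T -> R) :=
  \sum_(z : {ffun 'I_n -> T}) (\prod_(i < n) pi (z i) ^+ m i) * g z.

Definition fcons n (q : T) (z : {ffun 'I_n -> T}) : {ffun 'I_n.+1 -> T} :=
  [ffun i => if unlift ord0 i is Some j then z j else q].
Definition ftail n (z : {ffun 'I_n.+1 -> T}) : {ffun 'I_n -> T} :=
  [ffun j => z (lift ord0 j)].

Lemma fcons0 n q (z : {ffun 'I_n -> T}) : fcons q z ord0 = q.
Proof. by rewrite ffunE unlift_none. Qed.
Lemma fconsS n q (z : {ffun 'I_n -> T}) j : fcons q z (lift ord0 j) = z j.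
Proof. by rewrite ffunE liftK. Qed.

Lemma sum_fcons n (F : {ffun 'I_n.+1 -> T} -> R) :
  \sum_z F z = \sum_(q : T) \sum_(z' : {ffun 'I_n -> T}) F (fcons q z').
Proof.
rewrite pair_big /=.
rewrite (reindex (fun p : T * {ffun 'I_n -> T} => fcons p.1 p.2)) //=.
exists (fun z : {ffun 'I_n.+1 -> T} => (z ord0, ftail z)) => [[q z'] _|z _] /=.
  rewrite fcons0; congr pair; apply/ffunP => j; by rewrite ffunE fconsS.
apply/ffunP => i; rewrite ffunE; case: unliftP => [j ->|->] //.
by rewrite ffunE.
Qed.

Lemma exists_fresh n (z : {ffun 'I_n -> T}) : (n < Q)%N -> exists q, q \notin codom z.
Proof.
move=> hn; case: (boolP [exists q, q \notin codom z]) => [/existsP//|]; rewrite negb_exists => /forallP H; exfalso.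
have : (size (enum T) <= size (codom z))%N.
  apply: uniq_leq_size; first exact: enum_uniq.
  by move=> q _; have := H q; rewrite negbK.
by rewrite size_codom card_ord size_enum_ord leqNgt hn.
Qed.

Definition gnew n (g : {ffun 'I_n.+1 -> T} -> R) (z : {ffun 'I_n -> T}) : R :=
  if [pick q | q \notin codom z] is Some q then g (fcons q z) else 0.

Lemma fcons_perm n (s : {perm T}) q (z : {ffun 'I_n -> T}) :
  [ffun i => s (fcons q z i)] = fcons (s q) [ffun j => s (z j)].
Proof.
apply/ffunP => i; rewrite !ffunE; case: (unlift ord0 i) => [j|] //.
by rewrite ffunE.
Qed.

Lemma gnewE n (g : {ffun 'I_n.+1 -> T} -> R) (z : {ffun 'I_n -> T}) (q : T) :
  inv_g g -> q \notin codom z -> g (fcons q z) = gnew g z.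
Proof.
move=> Hg Hq; rewrite /gnew; case: pickP => [q' Hq'|H]; last by rewrite H in Hq.
rewrite -(Hg (tperm q q')) fcons_perm tpermL; congr (g (fcons _ _)).
apply/ffunP => j; rewrite ffunE tpermD //.
  by apply: contraNneq Hq => ->; apply: codom_f.
by apply: contraNneq Hq' => ->; apply: codom_f.
Qed.

Lemma gnew_inv n (g : {ffun 'I_n.+1 -> T} -> R) :
  (n < Q)%N -> inv_g g -> inv_g (gnew g).
Proof.
move=> hn Hg s z; have [q Hq] := exists_fresh z hn.
rewrite -(gnewE Hg Hq) -(gnewE Hg (q := s q)).
  by rewrite -fcons_perm Hg.
apply/codomP => -[j]; rewrite ffunE => /perm_inj Ej.
by move: Hq; rewrite Ej codom_f.
Qed.

Definition cnt n (z : {ffun 'I_n -> T}) (q : T) : nat := #|[pred j | z j == q]|.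

Lemma cnt_perm n (s : {perm T}) (z : {ffun 'I_n -> T}) q :
  cnt [ffun j => s (z j)] (s q) = cnt z q.
Proof. by apply: eq_card => j; rewrite !inE ffunE (inj_eq perm_inj). Qed.

Definition Gi n (g : {ffun 'I_n.+1 -> T} -> R) (i : 'I_n) (z : {ffun 'I_n -> T}) : R :=
  (g (fcons (z i) z) - gnew g z) / (cnt z (z i))%:R.

Lemma Gi_inv n (g : {ffun 'I_n.+1 -> T} -> R) i :
  (n < Q)%N -> inv_g g -> inv_g (Gi g i).
Proof.
move=> hn Hg s z; rewrite /Gi ffunE cnt_perm (gnew_inv hn Hg) -fcons_perm Hg //.
Qed.


Lemma step_point n (g : {ffun 'I_n.+1 -> T} -> R) (z : {ffun 'I_n -> T}) a pi :
  (n < Q)%N -> inv_g g ->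
  \sum_(q : T) pi q ^+ a * g (fcons q z) =
  psum pi a * gnew g z + \sum_(i < n) pi (z i) ^+ a * Gi g i z.
Proof.
move=> hn Hg.
have -> : \sum_(q : T) pi q ^+ a * g (fcons q z) =
   \sum_(q : T) pi q ^+ a * gnew g z + \sum_(q : T) pi q ^+ a * (g (fcons q z) - gnew g z).
  by rewrite -big_split /=; apply: eq_bigr => q _; rewrite -mulrDr addrC subrK.
rewrite /psum mulr_suml; congr (_ + _).
rewrite (partition_big (fun i => z i) predT) //=.
apply: eq_bigr => q _.
under eq_bigr => i /eqP Ei do rewrite /Gi Ei.
rewrite sumr_const -[X in _ = X]mulr_natr.
set c := #|_|.
have Ec : c = cnt z q by apply: eq_card => j; rewrite !inE.
case: (posnP c) => [c0|cpos].
  rewrite c0 mulr0; case: (boolP (q \in codom z)) => [/codomP [j Ej]|Hq].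
    by move/card0_eq: c0 => /(_ j); rewrite unfold_in /= Ej eqnE eqxx.
  by rewrite (gnewE Hg Hq) subrr mulr0.
rewrite -Ec -!mulrA mulVf ?mulr1 //.
by rewrite pnatr_eq0 -lt0n.
Qed.


Lemma L_step n (m : 'I_n.+1 -> nat) (g : {ffun 'I_n.+1 -> T} -> R) pi :
  (n < Q)%N -> inv_g g ->
  L m g pi = psum pi (m ord0) * L (fun j => m (lift ord0 j)) (gnew g) pi
   + \sum_(i < n) L (fun j => (m (lift ord0 j) + (j == i) * m ord0)%N) (Gi g i) pi.
Proof.
move=> hn Hg; rewrite /L sum_fcons exchange_big /=.
transitivity (\sum_(z : {ffun 'I_n -> T}) (\prod_(j < n) pi (z j) ^+ m (lift ord0 j)) *
    \sum_(q : T) pi q ^+ m ord0 * g (fcons q z)).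
  apply: eq_bigr => z _; rewrite mulr_sumr; apply: eq_bigr => q _.
  rewrite big_ord_recl fcons0.
  under eq_bigr => j _ do rewrite fconsS.
  by rewrite mulrA (mulrC (pi q ^+ _)).
transitivity (\sum_(z : {ffun 'I_n -> T}) ((\prod_(j < n) pi (z j) ^+ m (lift ord0 j)) *
    (psum pi (m ord0) * gnew g z) + (\prod_(j < n) pi (z j) ^+ m (lift ord0 j)) * \sum_(i < n) pi (z i) ^+ m ord0 * Gi g i z)).
  by apply: eq_bigr => z _; rewrite step_point // mulrDr.
rewrite big_split /=; congr (_ + _).
  by rewrite mulr_sumr; apply: eq_bigr => z _; rewrite mulrCA.
rewrite (eq_bigr (fun z : {ffun 'I_n -> T} => \sum_(i < n) (\prod_(j < n) pi (z j) ^+ m (lift ord0 j)) * (pi (z i) ^+ m ord0 * Gi g i z))); last by move=> z _; rewrite mulr_sumr.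
rewrite exchange_big; apply: eq_bigr => i _; apply: eq_bigr => z _.
rewrite mulrA; congr (_ * _); symmetry.
under eq_bigr => j _ do rewrite exprD.
rewrite big_split /=. congr (_ * _).
rewrite (bigD1 i) //= eqxx mul1n big1 ?mulr1 // => j /negPf ->.
by rewrite mul0n expr0.
Qed.

Lemma L_eq N pi pi' : (forall k, (k <= N)%N -> psum pi k = psum pi' k) ->
  forall n, (n < Q)%N -> forall (m : 'I_n -> nat) (g : {ffun 'I_n -> T} -> R),
  inv_g g -> (\sum_i m i <= N)%N -> L m g pi = L m g pi'.
Proof.
move=> Hp; elim=> [|n IH] hn m g Hg hm.
  by apply: eq_bigr => z _; rewrite !big_ord0.
have hn' : (n < Q)%N by apply: ltnW.
rewrite (L_step m pi hn' Hg) (L_step m pi' hn' Hg).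
move: hm; rewrite big_ord_recl => hm.
congr (_ * _ + _).
- apply: Hp; exact: leq_trans (leq_addr _ _) hm.
- apply: IH => //; [exact: gnew_inv | exact: leq_trans (leq_addl _ _) hm].
- apply: eq_bigr => i _; apply: IH => //; first exact: Gi_inv.
  rewrite big_split /=.
  have -> : (\sum_(i0 < n) (i0 == i) * m ord0 = m ord0)%N.
    by rewrite (bigD1 i) //= eqxx mul1n big1 ?addn0 // => j /negPf ->.
  by rewrite addnC.
Qed.

End Core.

Section A.
Variable R : rcfType.
Variable Q' : nat.
Local Notation Q := Q'.+1.

Definition xA (i : nat) : R := (i.*2.+2)%:R.
Definition sA (k : nat) : R := (k.*2.+1)%:R.

Lemma dpos k i : (i < k)%N -> 1 <= sA k - xA i.
Proof.
move=> hik; rewrite /sA /xA -natrB; last by rewrite -doubleS leqW // leq_double.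
by rewrite ler1n subn_gt0 ltnS -doubleS leq_double.
Qed.

Lemma dneg k i : (k <= i)%N -> sA k - xA i <= -1.
Proof.
move=> hki; rewrite /sA /xA -opprB lerN2 -natrB; last by rewrite ltnW // !ltnS leq_double.
by rewrite ler1n subn_gt0 !ltnS leq_double.
Qed.

Lemma dabs k i : 1 <= `|sA k - xA i|.
Proof.
case: (ltnP i k) => h.
  by have := dpos h => h1; rewrite ger0_norm // (le_trans ler01 h1).
have := dneg h => h1; rewrite ler0_norm; first by rewrite lerNr.
by apply: le_trans h1 _; rewrite lerN10.
Qed.

Definition fA : {poly R} := fp Q xA.

Lemma fA_horner s : fA.[s] = \prod_(i < Q) (s - xA i).
Proof. by rewrite /fA /fp horner_prod; apply: eq_bigr => i _; rewrite hornerXsubC. Qed.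

Lemma fA_abs k : 1 <= `|fA.[sA k]|.
Proof.
rewrite fA_horner normr_prod.
apply: le_trans (_ : 1 <= \prod_(i < Q) (1 : R)) _; first by rewrite big1_eq.
by apply: ler_prod => i _; rewrite ler01 dabs.
Qed.

Lemma fA_sign k : (k < Q)%N -> fA.[sA k] * fA.[sA k.+1] < 0.
Proof.
move=> hk; rewrite !fA_horner -big_split /= (bigD1 (Ordinal hk)) //=.
rewrite nmulr_rlt0; last first.
  rewrite nmulr_rlt0; first by apply: lt_le_trans; [exact: ltr01 | exact: (dpos (ltnSn k))].
  by apply: le_lt_trans; [exact: (dneg (leqnn k)) | exact: ltrN10].
apply: prodr_gt0 => i; rewrite -val_eqE /= => hik.
case: (ltnP i k) => h.
  apply: mulr_gt0; first by by apply: lt_le_trans; [exact: ltr01 | exact: (dpos h)].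
  by by apply: lt_le_trans; [exact: ltr01 | exact: (dpos (leq_trans h (leqnSn k)))].
have h' : (k < i)%N by rewrite ltn_neqAle eq_sym hik h.
rewrite nmulr_rgt0; first by by apply: le_lt_trans; [exact: (dneg h') | exact: ltrN10].
by by apply: le_lt_trans; [exact: (dneg h) | exact: ltrN10].
Qed.


Definition cA : R := 2%:R^-1.
Lemma cA_gt0 : 0 < cA. Proof. by rewrite invr_gt0 ltr0n. Qed.
Lemma cA_lt1 : cA < 1. Proof. by rewrite invf_lt1 ?ltr0n // ltr1n. Qed.

Definition gA : {poly R} := fA + cA%:P.

Lemma gf_pos k : 0 < gA.[sA k] * fA.[sA k].
Proof.
rewrite /gA hornerD hornerC.
have := fA_abs k; set v := fA.[sA k] => hv.
case: (ltgtP 0 v) => h.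
- apply: mulr_gt0 => //; apply: ltr_wpDr; [exact: ltW cA_gt0 | exact: h].
- rewrite nmulr_rgt0 //.
  rewrite ltr0_norm // in hv.
  have hv' : v <= -1 by rewrite lerNr.
  apply: (le_lt_trans (lerD hv' (lexx cA))).
  by rewrite addrC subr_lt0 cA_lt1.
- by move: hv; rewrite -h normr0 ler10.
Qed.

Lemma gA_sign k : (k < Q)%N -> gA.[sA k] * gA.[sA k.+1] < 0.
Proof.
move=> hk.
have h1 := gf_pos k; have h2 := gf_pos k.+1; have h3 := fA_sign hk.
have : 0 < (gA.[sA k] * gA.[sA k.+1]) * (fA.[sA k] * fA.[sA k.+1]).
  by rewrite mulrACA; apply: mulr_gt0.
by rewrite nmulr_lgt0.
Qed.

Lemma root_between (p : {poly R}) a b : a <= b -> p.[a] * p.[b] < 0 ->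
  exists r, (a < r < b) && root p r.
Proof.
move=> hab hp.
have [ra rb] : p.[a] != 0 /\ p.[b] != 0.
  by split; apply/eqP => h; move: hp; rewrite h ?mul0r ?mulr0 ltxx.
have key : forall q : {poly R}, q.[a] <= 0 <= q.[b] -> q.[a] != 0 -> q.[b] != 0 ->
    root q =1 root p -> exists r, (a < r < b) && root p r.
  move=> q hq qa qb Eq; have [r /andP [h1 h2] hr] := poly_ivt hab hq.
  exists r; rewrite -Eq hr andbT.
  rewrite !lt_neqAle h1 h2 !andbT.
  apply/andP; split; apply/eqP => E.
    by move: qa; rewrite E -rootE hr.
  by move: qb; rewrite -E -rootE hr.
case: (ltgtP p.[a] 0) => ha; last by move: ra; rewrite ha eqxx.
- have hb : 0 < p.[b] by rewrite -(nmulr_rlt0 _ ha).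
  by apply: (key p) => //; rewrite (ltW ha) (ltW hb).
- have hb : p.[b] < 0 by rewrite -(pmulr_rlt0 _ ha).
  apply: (key (- p)); rewrite ?hornerN ?oppr_eq0 //.
    by rewrite oppr_le0 oppr_ge0 (ltW ha) (ltW hb).
  by move=> r; rewrite rootN.
Qed.

Lemma yA_ex k : exists r : R, (k < Q)%N ==> ((sA k < r < sA k.+1) && root gA r).
Proof.
case: (ltnP k Q) => hk; last by exists 0.
have hs : sA k < sA k.+1 by rewrite ltr_nat ltnS ltn_double.
have [r hr] := root_between (ltW hs) (gA_sign hk).
by exists r; rewrite hr.
Qed.

Definition yA k : R := xchoose (yA_ex k).

Lemma yA_spec k : (k < Q)%N -> (sA k < yA k < sA k.+1) && root gA (yA k).
Proof. by move=> hk; have /implyP := xchooseP (yA_ex k); apply. Qed.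

Lemma yA_lt k l : (k < l)%N -> (l < Q)%N -> yA k < yA l.
Proof.
move=> hkl hl.
have /andP [/andP [_ h1] _] := yA_spec (ltn_trans hkl hl).
have /andP [/andP [h2 _] _] := yA_spec hl.
apply: (lt_trans h1); apply: le_lt_trans h2.
by rewrite ler_nat ltnS leq_double.
Qed.

Lemma yA_pos k : (k < Q)%N -> 0 < yA k.
Proof.
move=> hk; have /andP [/andP [h _] _] := yA_spec hk.
by apply: lt_trans h; rewrite ltr0n.
Qed.

Lemma fp_yA : fp Q yA = gA.
Proof.
have szg : size gA = Q.+1.
  rewrite /gA size_polyDl /fA size_fp //.
  by apply: leq_ltn_trans (size_polyC_leq1 _) _.
have lcg : lead_coef gA = 1.
  rewrite /gA lead_coefDl ?size_fp; last by apply: leq_ltn_trans (size_polyC_leq1 _) _.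
  exact/eqP/monic_prod_XsubC.
have := @all_roots_prod_XsubC _ gA (map yA (iota 0 Q)).
rewrite size_map size_iota lcg scale1r => ->.
- by rewrite big_map /fp -(big_mkord xpredT (fun i => 'X - (yA i)%:P)).
- by [].
- apply/allP => r /mapP [k]; rewrite mem_iota add0n => /andP [_ hk] ->.
  by have /andP [_ ->] := yA_spec hk.
rewrite uniq_rootsE map_inj_in_uniq ?iota_uniq //.
move=> k l; rewrite !mem_iota !add0n => /andP [_ hk] /andP [_ hl] E.
case: (ltngtP k l) => // h.
  by move: (yA_lt h hl); rewrite E ltxx.
by move: (yA_lt h hk); rewrite E ltxx.
Qed.

End A.

Lemma exists_pair (R : rcfType) (Q' : nat) : (0 < Q')%N ->
  exists pi pi' : 'I_Q'.+1 -> R,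
   [/\ open_simplex pi, open_simplex pi', ~ is_label_perm pi pi' &
       forall k, (k <= Q')%N -> psum pi k = psum pi' k].
Proof.
move=> hQ'.
have Hps : forall k, (k <= Q')%N -> ps Q'.+1 (@xA R) k = ps Q'.+1 (@yA R Q') k.
  apply: ps_eq => i hi.
  by rewrite fp_yA /gA coefD coefC gtn_eqF // addr0.
set S := ps Q'.+1 (@xA R) 1.
have xpos : forall i, 0 < @xA R i by move=> i; rewrite ltr0n.
have Spos : 0 < S.
  apply: (lt_le_trans (xpos 0%N)); rewrite /S /ps big_ord_recl expr1 lerDl.
  by apply: sumr_ge0 => i _; rewrite ltW // exprn_gt0.
have S0 : S != 0 by rewrite gt_eqF.
exists (fun q : 'I_Q'.+1 => xA R q / S), (fun q : 'I_Q'.+1 => yA R Q' q / S); split.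
- split; first by move=> q; rewrite divr_gt0.
  by rewrite -mulr_suml -[X in X / S](eq_bigr _ (fun i _ => expr1 _)) divff.
- split; first by move=> q; rewrite divr_gt0 ?yA_pos.
  rewrite -mulr_suml -[X in X / S](eq_bigr _ (fun i _ => expr1 _)).
  have -> : \sum_(i < Q'.+1) yA R Q' i ^+ 1 = S by rewrite /S Hps.
  by rewrite divff.
- move=> [s Hs].
  have Ey : forall q : 'I_Q'.+1, yA R Q' q = xA R (s q).
    by move=> q; apply: (mulIf (invr_neq0 S0)); exact: Hs q.
  have : fp Q'.+1 (yA R Q') = fA R Q'.
    rewrite /fA /fp [RHS](reindex_inj (@perm_inj _ s)) /=.
    by apply: eq_bigr => q _; rewrite Ey.
  rewrite fp_yA /gA -{2}[fA R Q']addr0 => /addrI /eqP.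
  by rewrite polyC_eq0 gt_eqF // cA_gt0.
- move=> k hk; rewrite /psum.
  under eq_bigr => q _ do rewrite expr_div_n.
  under [RHS]eq_bigr => q _ do rewrite expr_div_n.
  by rewrite -!mulr_suml -/(ps _ _ k) -/(ps _ _ k) Hps.
Qed.

Lemma law_as_L (R : numFieldType) (Q n : nat) (pi : 'I_Q -> R) (w : {ffun 'I_n -> 'I_Q} -> R) :
  \sum_(z : {ffun 'I_n -> 'I_Q}) (\prod_(i < n) pi (z i)) * w z = L (fun _ => 1%N) w pi.
Proof. by apply: eq_bigr => z _; congr (_ * _); apply: eq_bigr => i _; rewrite expr1. Qed.

Lemma card_bound n Q' : (n < Q'.+1)%N -> (\sum_(i < n) (fun _ : 'I_n => 1%N) i <= Q')%N.
Proof. by rewrite sum_nat_const card_ord muln1. Qed.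

Unset Implicit Arguments.

Theorem proposition3 (R : rcfType) (Q n : nat) (hQ : (2 <= Q)%N) (hn : (n < Q)%N) :
  (forall alpha beta : R, 0 <= alpha <= 1 -> 0 <= beta <= 1 ->
     exists pi pi' : 'I_Q -> R,
       [/\ open_simplex pi, open_simplex pi', ~ is_label_perm pi pi' &
           forall x : 'I_n -> 'I_n -> bool,
             binary_affil_law pi alpha beta x = binary_affil_law pi' alpha beta x])
  /\
  (forall (S : Type) (mu_in mu_out : (S -> Prop) -> R),
     exists pi pi' : 'I_Q -> R,
       [/\ open_simplex pi, open_simplex pi', ~ is_label_perm pi pi' &
           forall A : 'I_n -> 'I_n -> (S -> Prop),
             weighted_affil_law pi mu_in mu_out A = weighted_affil_law pi' mu_in mu_out A]).
Proof.
case: Q hQ hn => [|Q'] // hQ hn.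
have hQ' : (0 < Q')%N by [].
have [pi [pi' [H1 H2 H3 Hp]]] := exists_pair R hQ'.
split.
- move=> alpha beta _ _; exists pi, pi'; split => // x.
  rewrite /binary_affil_law !law_as_L.
  apply: (L_eq Hp) => //; last exact: card_bound.
  move=> s z; apply: eq_bigr => i _; apply: eq_bigr => j _.
  by rewrite !ffunE (inj_eq perm_inj).
- move=> S mu_in mu_out; exists pi, pi'; split => // A.
  rewrite /weighted_affil_law !law_as_L.
  apply: (L_eq Hp) => //; last exact: card_bound.
  move=> s z; apply: eq_bigr => i _; apply: eq_bigr => j _.
  by rewrite !ffunE (inj_eq perm_inj).
Qed.
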